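(* Let $H_3(\mathbb{Z})=\langle x,y,z\mid [x,y]=z,\ z\text{ central}\rangle$ be the $3$-dimensional integral Heisenberg group and let $p$ be a prime. If $\pi:H_3(\mathbb{Z})\to Q$ is a surjective homomorphism onto a finite $q$-group $Q$, where $q$ is a prime distinct from $p$, then $\pi(x^p)$ and $\pi(x^pz^m)$ are conjugate in $Q$ for every natural number $m$.
   Context: $[a,b]=aba^{-1}b^{-1}$. *)

(* Defs.v *)
From mathcomp Require Import all_boot all_order all_algebra all_fingroup all_solvable.
Set Implicit Arguments. Unset Strict Implicit. Unset Printing Implicit Defensive.
Import GRing.Theory Num.Theory.
Local Open Scope ring_scope.

(* The integral Heisenberg group H_3(Z), realized concretely as triples
   (a,b,c) of integers, corresponding to upper unitriangular matrices
   [[1,a,c],[0,1,b],[0,0,1]], with multiplication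
   (a,b,c)(a',b',c') = (a+a', b+b', c+c'+a*b'). *)
Definition heis := (int * int * int)%type.

Definition heis_mul (g h : heis) : heis :=
  let: (a, b, c) := g in let: (a', b', c') := h in
  (a + a', b + b', c + c' + a * b').

Definition heis_one : heis := (0, 0, 0).

Definition heis_inv (g : heis) : heis :=
  let: (a, b, c) := g in (- a, - b, - c + a * b).

Fixpoint heis_exp (g : heis) (n : nat) : heis :=
  match n with
  | O => heis_one
  | S k => heis_mul g (heis_exp g k)
  end.

Definition heis_comm (g h : heis) : heis :=
  heis_mul (heis_mul (heis_mul g h) (heis_inv g)) (heis_inv h).

Definition hx : heis := (1, 0, 0).
Definition hy : heis := (0, 1, 0).
Definition hz : heis := (0, 0, 1).

Lemma heis_comm_xy : heis_comm hx hy = hz.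
Proof. by rewrite /heis_comm /= !mulr0 !mul0r !addr0 ?add0r ?mulr1 ?subrr. Qed.

(* Main.v *)
Require Import Defs.
From mathcomp Require Import all_boot all_order all_algebra all_fingroup all_solvable.
From mathcomp Require Import zify.
Set Implicit Arguments. Unset Strict Implicit. Unset Printing Implicit Defensive.
Lemma bez p N m : prime p -> coprime p N -> 0 < N -> exists b k, p * b = m + k * N.
Proof.
move=> pp cpN N0.
set u := p ^ (totient N).-1.
have pu : p * u = 1 %[mod N].
  rewrite /u -expnS prednK ?totient_gt0 //.
  exact: Euler_exp_totient.
have pum : p * (u * m) = m %[mod N] by rewrite mulnA -modnMml pu modnMml mul1n.
have le : m <= p * (u * m).
  rewrite mulnA leq_pmull // muln_gt0 prime_gt0 //=.
  by rewrite expn_gt0 prime_gt0.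
move/eqP: pum; rewrite eqn_mod_dvd // => /dvdnP [k hk].
by exists (u * m), k; rewrite -hk subnKC.
Qed.

Local Open Scope group_scope.

Lemma hexp_x n : heis_exp hx n = ((Posz n), 0%R, 0%R).
Proof.
elim: n => [//|n IH] /=; rewrite IH /hx /=.
by congr (_,_,_); lia.
Qed.

Lemma hexp_y n : heis_exp hy n = (0%R, (Posz n), 0%R).
Proof.
elim: n => [//|n IH] /=; rewrite IH /hy /=.
by congr (_,_,_); lia.
Qed.

Lemma hexp_z n : heis_exp hz n = (0%R, 0%R, (Posz n)).
Proof.
elim: n => [//|n IH] /=; rewrite IH /hz /=.
by congr (_,_,_); lia.
Qed.

Theorem mainTheorem18 (p q : nat) (gT : finGroupType) (Q : {group gT})
    (pi : heis -> gT) :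
  prime p -> prime q -> q != p -> q.-group Q ->
  (forall g h : heis, pi (heis_mul g h) = pi g * pi h) ->
  (forall g : heis, pi g \in Q) ->
  (forall u : gT, u \in Q -> exists g : heis, pi g = u) ->
  forall m : nat,
    exists2 t : gT, t \in Q &
      pi (heis_exp hx p) ^ t = pi (heis_mul (heis_exp hx p) (heis_exp hz m)).
Proof.
move=> pp pq qp qQ hom inQ _ m.
set N := #|Q|.
have cpN : coprime p N.
  rewrite /N; have [e ->] := p_natP qQ.
  rewrite coprimeXr // prime_coprime // dvdn_prime2 //.
  by rewrite eq_sym.
have N0 : (0 < N)%N by apply: cardG_gt0.
have [b [k hk]] := bez m pp cpN N0.
exists (pi (heis_exp hy b)); first exact: inQ.
have pz : forall n, pi (0%R, 0%R, (Posz n)) = pi hz ^+ n.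
  elim=> [|n IH].
    have e : pi heis_one = pi heis_one * pi heis_one by rewrite -hom.
    rewrite expg0; change (pi heis_one = 1); apply: (mulgI (pi heis_one)).
    by rewrite mulg1 -{1}e.
  by rewrite expgS -IH -hom /hz /=; congr (pi (_,_,_)); lia.
rewrite hexp_x hexp_z hexp_y /conjg.
apply: (mulgI (pi (0%R, (Posz b), 0%R))); rewrite mulKVg.
rewrite -!hom /=.
set X := (_, _, _).
set Y := (_, _, _).
have -> : X = heis_mul Y (0%R, 0%R, (Posz (k * N))).
  rewrite /X /Y /=; congr (_,_,_); nia.
by rewrite hom pz expgM expg_cardG ?groupX ?inQ // mulg1.
Qed.
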